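(* Let $\varepsilon>0$ and $a\geq 0$ with $a+\varepsilon\leq 1$. If $\omega(1,1,a)=r$, then $\omega(1,1-\varepsilon,a+\varepsilon)\leq r$.
   Context: $\omega(x_1,x_2,x_3)$ denotes the exponent of rectangular matrix multiplication: multiplying an $n^{x_1}\times n^{x_2}$ matrix by an $n^{x_2}\times n^{x_3}$ matrix takes $n^{\omega(x_1,x_2,x_3)+o(1)}$ time (equivalently, arithmetic operations / tensor rank exponent). It is invariant under permuting its three arguments. *)

(* Defs.v *)
From HB Require Import structures.
From mathcomp Require Import all_boot all_order all_algebra.
From mathcomp Require Import all_classical all_reals all_analysis.
Set Implicit Arguments. Unset Strict Implicit. Unset Printing Implicit Defensive.
Import Order.TTheory GRing.Theory Num.Theory.
Local Open Scope ring_scope.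
Local Open Scope classical_set_scope.

(* The matrix multiplication tensor <m,n,p> = sum_{i,j,l} x_{ij} y_{jl} z_{li}
   over the field F has rank <= k. *)
Definition mm_rank_le (F : fieldType) (m n p k : nat) : Prop :=
  exists (u : 'I_k -> 'I_m -> 'I_n -> F) (v : 'I_k -> 'I_n -> 'I_p -> F)
         (w : 'I_k -> 'I_p -> 'I_m -> F),
    forall (i : 'I_m) (j j' : 'I_n) (l l' : 'I_p) (i' : 'I_m),
      \sum_(s < k) u s i j * v s j' l * w s l' i'
        = ((j == j') && (l == l') && (i == i'))%:R.

Definition dimn (R : realType) (N : nat) (x : R) : nat := Num.truncn (N%:R `^ x).

Definition omega_set (F : fieldType) (R : realType) (x1 x2 x3 : R) : set R :=
  [set tau | exists C : R, forall N : nat, (0 < N)%N ->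
     exists k : nat, mm_rank_le F (dimn N x1) (dimn N x2) (dimn N x3) k
                     /\ k%:R <= C * N%:R `^ tau].

Definition omega (F : fieldType) (R : realType) (x1 x2 x3 : R) : R :=
  inf (omega_set F x1 x2 x3).

(* Main.v *)
Require Import Defs.
From HB Require Import structures.
From mathcomp Require Import all_boot all_order all_algebra.
From mathcomp Require Import all_classical all_reals all_analysis.
From mathcomp Require Import ring lra.
Import Order.TTheory GRing.Theory Num.Theory.
Set Implicit Arguments. Unset Strict Implicit.
Local Open Scope ring_scope.

Definition gdec (F : fieldType) (S I J L : finType) :=
  exists (u : S -> I -> J -> F) (v : S -> J -> L -> F) (w : S -> L -> I -> F),
    forall (i : I) (j j' : J) (l l' : L) (i' : I),
      \sum_(s : S) u s i j * v s j' l * w s l' i'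
        = ((j == j') && (l == l') && (i == i'))%:R.

Lemma gdec_cyc F S I J L : gdec F S I J L -> gdec F S J L I.
Proof.
move=> [u [v [w H]]]; exists v, w, u => a b b' c c' a'.
transitivity (\sum_s u s c' a' * v s a b * w s b' c).
  by apply: eq_bigr => s _; rewrite mulrC mulrA.
rewrite H; congr (_%:R).
by rewrite (eq_sym a') (eq_sym c'); case: (a == a'); case: (b == b'); case: (c == c').
Qed.

Lemma gdec_prod F S1 I1 J1 L1 S2 I2 J2 L2 :
  gdec F S1 I1 J1 L1 -> gdec F S2 I2 J2 L2 ->
  gdec F (S1 * S2)%type (I1 * I2)%type (J1 * J2)%type (L1 * L2)%type.
Proof.
move=> [u1 [v1 [w1 H1]]] [u2 [v2 [w2 H2]]].
exists (fun s i j => u1 s.1 i.1 j.1 * u2 s.2 i.2 j.2).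
exists (fun s i j => v1 s.1 i.1 j.1 * v2 s.2 i.2 j.2).
exists (fun s i j => w1 s.1 i.1 j.1 * w2 s.2 i.2 j.2).
move=> [i1 i2] [j1 j2] [j1' j2'] [l1 l2] [l1' l2'] [i1' i2'] /=.
rewrite -(pair_big xpredT xpredT (fun a b =>
   u1 a i1 j1 * u2 b i2 j2 * (v1 a j1' l1 * v2 b j2' l2) * (w1 a l1' i1' * w2 b l2' i2'))) /=.
transitivity ((\sum_(a : S1) (u1 a i1 j1 * v1 a j1' l1 * w1 a l1' i1')) *
              \sum_(b : S2) (u2 b i2 j2 * v2 b j2' l2 * w2 b l2' i2')).
  rewrite mulr_suml; apply: eq_bigr => a _; rewrite mulr_sumr; apply: eq_bigr => b _.
  ring.
rewrite H1 H2 !xpair_eqE -natrM; congr (_%:R).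
by case: (j1 == j1'); case: (j2 == j2'); case: (l1 == l1'); case: (l2 == l2');
   case: (i1 == i1'); case: (i2 == i2').
Qed.

Lemma gdec_naive F (I J L : finType) : gdec F ((I * J) * L)%type I J L.
Proof.
exists (fun s i j => ((s.1.1 == i) && (s.1.2 == j))%:R).
exists (fun s j l => ((s.1.2 == j) && (s.2 == l))%:R).
exists (fun s l i => ((s.2 == l) && (s.1.1 == i))%:R).
move=> i j j' l l' i'.
rewrite (bigD1 ((i, j), l)) //= big1 ?addr0.
  rewrite !eqxx /= -!natrM; congr (_%:R).
  by case: (j == j'); case: (l == l'); case: (i == i').
move=> [[a b] c] /= /negbTE.
rewrite !xpair_eqE.
case: (a == i); case: (b == j); case: (c == l) => //= _.
all: by rewrite ?andbF /= ?(mul0r, mulr0).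
Qed.

Lemma gdec_ord F m n p k : mm_rank_le F m n p k -> gdec F 'I_k 'I_m 'I_n 'I_p.
Proof. by move=> [u [v [w H]]]; exists u, v, w. Qed.

Lemma inj_card (T : finType) x : (x <= #|T|)%N -> exists f : 'I_x -> T, injective f.
Proof.
move=> H; exists (fun i => enum_val (widen_ord H i)).
by move=> a b /enum_val_inj /(congr1 val) /= /val_inj.
Qed.

Lemma gdec_rank F S I J L m n p : gdec F S I J L ->
  (m <= #|I|)%N -> (n <= #|J|)%N -> (p <= #|L|)%N -> mm_rank_le F m n p #|S|.
Proof.
move=> [u [v [w H]]] /inj_card [fI iI] /inj_card [fJ iJ] /inj_card [fL iL].
exists (fun s i j => u (enum_val s) (fI i) (fJ j)).
exists (fun s j l => v (enum_val s) (fJ j) (fL l)).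
exists (fun s l i => w (enum_val s) (fL l) (fI i)).
move=> i j j' l l' i'.
rewrite (reindex_onto (@enum_rank S) (@enum_val S (mem predT))) /=; last first.
  by move=> s _; rewrite enum_valK.
rewrite (eq_bigl predT); last by move=> s; rewrite enum_rankK eqxx.
under eq_bigr do rewrite enum_rankK.
by rewrite H !inj_eq.
Qed.
Section A.
Variable R : realType.

Lemma dimn1 (N : nat) : dimn N (1 : R) = N.
Proof. by rewrite /dimn powRr1 // natrK. Qed.

Lemma powN_ge1 (N : nat) (b : R) : (0 < N)%N -> 0 <= b -> 1 <= N%:R `^ b.
Proof.
move=> N0 b0; have h : 1 <= (N%:R : R) by rewrite ler1n.
by have := ler_powR h b0; rewrite powRr0.
Qed.

Lemma dimn_ge1 (N : nat) (b : R) : (0 < N)%N -> 0 <= b -> (0 < dimn N b)%N.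
Proof. by move=> N0 b0; rewrite /dimn truncn_gt0 powN_ge1. Qed.

Lemma dimn_le (N : nat) (b : R) : (dimn N b)%:R <= N%:R `^ b.
Proof. by rewrite /dimn truncn_le powR_ge0. Qed.

Lemma dimn_half (N : nat) (b : R) : (0 < N)%N -> 0 <= b ->
  N%:R `^ b / 2 <= (dimn N b)%:R.
Proof.
move=> N0 b0; have h1 := truncnS_gt (N%:R `^ b : R).
have h2 : (1 <= Num.truncn (N%:R `^ b : R))%N by rewrite truncn_gt0 powN_ge1.
have h3 : 1 <= (Num.truncn (N%:R `^ b : R))%:R :> R by rewrite ler1n.
rewrite /dimn; move: h1; rewrite -addn1 natrD; lra.
Qed.

End A.

Lemma mm_pos (F : fieldType) m n p k : (0 < m)%N -> (0 < n)%N -> (0 < p)%N ->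
  mm_rank_le F m n p k -> (0 < k)%N.
Proof.
case: m => // m _; case: n => // n _; case: p => // p _.
move=> [u [v [w H]]]; case: k u v w H => // u v w H.
have := H ord0 ord0 ord0 ord0 ord0 ord0; rewrite big_ord0 !eqxx /= => /eqP.
by rewrite eq_sym oner_eq0.
Qed.

Lemma omega_lb (F : fieldType) (R : realType) (x2 x3 tau : R) :
  0 <= x2 -> 0 <= x3 -> omega_set F 1 x2 x3 tau -> 0 <= tau.
Proof.
move=> h2 h3 [C HC].
have kb : forall N, (0 < N)%N -> 1 <= C * N%:R `^ tau.
  move=> N N0; have [k [Hk Hle]] := HC N N0.
  have : (0 < k)%N.
    apply: (@mm_pos F _ _ _ k _ _ _ Hk); rewrite ?dimn1 ?dimn_ge1 //.
  by rewrite -(ler_nat R) => /le_trans; apply.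
rewrite leNgt; apply/negP => tneg.
have C1 : 1 <= C by have := kb 1%N isT; rewrite powR1 mulr1.
set B := ln C / (- tau).
set N := (Num.truncn (expR B)).+1.
have hN : expR B < N%:R by exact: truncnS_gt.
have hlnN : B < ln (N%:R : R).
  by rewrite -(ltr_ln) ?posrE ?expR_gt0 ?(lt_trans _ hN) ?expR_gt0 // expRK in hN.
have := kb N isT.
rewrite /powR gt_eqF ?ltr0Sn //.
have Cpos : 0 < C by lra.
rewrite -{1}(lnK Cpos) -expRD.
have e : tau * B = - ln C.
  by rewrite /B; field; lra.
have : tau * ln (N%:R:R) < tau * B by rewrite ltr_nM2l.
rewrite e => h.
have : expR (ln C + tau * ln (N%:R : R)) < expR 0.
  by rewrite ltr_expR; lra.
rewrite expR0; lra.
Qed.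

Lemma nat_bounds (R : realType) (x : R) : 1 <= x ->
  2 * x <= (2 * (Num.truncn x).+1)%N%:R /\ (2 * (Num.truncn x).+1)%N%:R <= 4 * x.
Proof.
move=> x1; have h1 := truncnS_gt x.
have h2 : (Num.truncn x)%:R <= x by rewrite truncn_le; lra.
move: h1; rewrite natrM -addn1 natrD; lra.
Qed.

Lemma aux1 (R : realType) (x m : R) : 0 <= x -> 2 * x <= m -> x <= m.
Proof. lra. Qed.

Lemma aux2 (R : realType) (x ya M K dK : R) : 0 <= x -> 0 <= ya ->
  2 * x <= M -> ya <= K -> K / 2 <= dK -> x * ya <= M * dK.
Proof.
move=> x0 y0 h1 h2 h3.
have -> : x * ya = (2 * x) * (ya / 2) by field.
apply: ler_pM; lra.
Qed.

Lemma aux_pow (R : realType) (n P tau : R) : 1 <= n -> n <= P -> P <= 16 * n ->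
  P `^ tau <= (16 `^ tau + 1) * n `^ tau.
Proof.
move=> n1 h1 h2.
have n0 : 0 <= n by lra.
have P0 : 0 <= P by lra.
have a0 : 0 <= 16 `^ tau * n `^ tau by rewrite mulr_ge0 ?powR_ge0.
have b0 : 0 <= n `^ tau by rewrite powR_ge0.
case: (leP 0 tau) => ht.
  have : P `^ tau <= (16 * n) `^ tau.
    by apply: ge0_ler_powR; rewrite ?nnegrE //; lra.
  rewrite powRM //; lra.
have : P `^ tau <= n `^ tau.
  have e : forall z, z `^ tau = (z `^ (- tau))^-1 by move=> z; rewrite -powRN opprK.
  rewrite !e.
  have p1 : 0 < n `^ (- tau) by rewrite powR_gt0 //; lra.
  have p2 : n `^ (- tau) <= P `^ (- tau).
    by apply: ge0_ler_powR; rewrite ?nnegrE //; lra.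
  rewrite lef_pV2 ?posrE //; exact: (lt_le_trans p1 p2).
lra.
Qed.

Lemma final_bound (R : realType) (k1 k2 : nat) (C m k n tau : R) :
  k1%:R <= C * m `^ tau -> k2%:R <= C * k `^ tau -> 0 <= m -> 0 <= k ->
  (m * k) `^ tau <= (16 `^ tau + 1) * n `^ tau ->
  (k1 * k2)%N%:R <= C * C * (16 `^ tau + 1) * n `^ tau.
Proof.
move=> h1 h2 m0 k0 hp.
rewrite natrM.
apply: le_trans (_ : (C * m `^ tau) * (C * k `^ tau) <= _).
  by apply: ler_pM; rewrite ?ler0n.
have -> : C * m `^ tau * (C * k `^ tau) = (C * C) * (m * k) `^ tau.
  by rewrite powRM //; ring.
have CC : 0 <= C * C by rewrite -expr2 sqr_ge0.
rewrite -[X in _ <= X]mulrA; exact: (ler_wpM2l CC hp).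
Qed.

Lemma subset_main (F : fieldType) (R : realType) (eps a tau : R) :
  0 < eps -> 0 <= a -> a + eps <= 1 ->
  omega_set F 1 1 a tau -> omega_set F 1 (1 - eps) (a + eps) tau.
Proof.
move=> e0 a0 ae [C HC].
set t := eps / (1 - a).
have ha : 0 < 1 - a by lra.
have t0 : 0 < t by rewrite /t divr_gt0.
have t1 : t <= 1 by rewrite /t ler_pdivrMr // mul1r; lra.
have teq : t * (1 - a) = eps by rewrite /t; field; lra.
exists (C * C * (16 `^ tau + 1)) => N N0.
set n : R := N%:R.
have n1 : 1 <= n by rewrite /n ler1n.
have n0 : n != 0 by rewrite gt_eqF //; lra.
set x := n `^ (1 - t).
set y := n `^ t.
have x1 : 1 <= x by rewrite /x powN_ge1 //; lra.
have y1 : 1 <= y by rewrite /y powN_ge1 //; lra.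
have xy : x * y = n by rewrite /x /y -powRD ?n0 ?implybT // subrK powRr1 //; lra.
have e1 : n `^ (1 - eps) = x * y `^ a.
  by rewrite /x /y -powRrM -powRD ?n0 ?implybT // -teq; congr (_ `^ _); ring.
have e2 : n `^ (a + eps) = x `^ a * y.
  by rewrite /x /y -powRrM -powRD ?n0 ?implybT // -teq; congr (_ `^ _); ring.
set M := (2 * (Num.truncn x).+1)%N.
set K := (2 * (Num.truncn y).+1)%N.
have [hM1 hM2] := nat_bounds x1.
have [hK1 hK2] := nat_bounds y1.
have M0 : (0 < M)%N by rewrite /M muln_gt0.
have K0 : (0 < K)%N by rewrite /K muln_gt0.
have x0 : 0 <= x by apply: le_trans x1.
have y0 : 0 <= y by apply: le_trans y1.
have xM : x <= M%:R by apply: aux1 x0 hM1.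
have yK : y <= K%:R by apply: aux1 y0 hK1.
have [k1 [H1 Hk1]] := HC M M0. rewrite dimn1 in H1.
have [k2 [H2 Hk2]] := HC K K0. rewrite dimn1 in H2.
have G := gdec_prod (gdec_ord H1) (gdec_cyc (gdec_ord H2)).
have yaK : y `^ a <= K%:R `^ a.
  apply: ge0_ler_powR => //; rewrite ?nnegrE ?ler0n //.
have xaM : x `^ a <= M%:R `^ a.
  apply: ge0_ler_powR => //; rewrite ?nnegrE ?ler0n //.
have dK := dimn_half K0 a0.
have dM := dimn_half M0 a0.
have ya0 : 0 <= y `^ a by apply: powR_ge0.
have xa0 : 0 <= x `^ a by apply: powR_ge0.
exists (k1 * k2)%N; split.
  suff : mm_rank_le F N (dimn N (1-eps)) (dimn N (a+eps)) #|{: 'I_k1 * 'I_k2}|.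
    by rewrite card_prod !card_ord dimn1.
  apply: (gdec_rank G).
  - rewrite card_prod !card_ord -(ler_nat R) natrM -/n -xy.
    by apply: ler_pM.
  - rewrite card_prod !card_ord -(ler_nat R) natrM.
    apply: le_trans (dimn_le _ _) _; rewrite -/n e1.
    exact: aux2 x0 ya0 hM1 yaK dK.
  - rewrite card_prod !card_ord -(ler_nat R) natrM.
    apply: le_trans (dimn_le _ _) _; rewrite -/n e2.
    rewrite [X in X <= _]mulrC [X in _ <= X]mulrC.
    exact: aux2 y0 xa0 hK1 xaM dM.
have nP : n <= M%:R * K%:R by rewrite -xy; apply: ler_pM.
have Pn : M%:R * K%:R <= 16 * n.
  rewrite -xy; have -> : 16 * (x * y) = (4 * x) * (4 * y) by ring.
  by apply: ler_pM; rewrite ?ler0n.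
have hp := aux_pow tau n1 nP Pn.
clearbody M K x y n t.
exact: final_bound Hk1 Hk2 (ler0n _ _) (ler0n _ _) hp.
Qed.

Lemma naive_in (F : fieldType) (R : realType) (a : R) :
  0 <= a -> omega_set F 1 1 a (1 + 1 + a).
Proof.
move=> a0; exists 1 => N N0.
have := gdec_rank (gdec_naive F 'I_N 'I_N 'I_(dimn N a))
   (m := dimn N (1:R)) (n := dimn N (1:R)) (p := dimn N a).
rewrite !card_prod !card_ord dimn1 => h.
exists (N * N * dimn N a)%N; split; first by apply: h.
have n0 : (N%:R : R) != 0 by rewrite pnatr_eq0 -lt0n.
rewrite mul1r powRD ?n0 ?implybT // powRD ?n0 ?implybT // powRr1 ?ler0n //.
rewrite !natrM; apply: ler_wpM2l; first by rewrite -natrM ler0n.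
exact: dimn_le.
Qed.

Unset Implicit Arguments.
Theorem theorem9 (F : fieldType) (R : realType) (eps a r : R) :
  0 < eps -> 0 <= a -> a + eps <= 1 ->
  omega F 1 1 a = r -> omega F 1 (1 - eps) (a + eps) <= r.
Proof.
move=> e0 a0 ae <-; rewrite /omega.
apply: lb_le_inf.
  by exists (1 + 1 + a); apply: naive_in.
move=> tau Htau; apply: ge_inf.
  exists 0 => y Hy; apply: (omega_lb _ _ Hy); lra.
exact: subset_main.
Qed.
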